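(* Let $S,C,D,\Delta\ge1$, $\mathcal{X}\subseteq\mathbb{R}^D$ nonempty convex compact, and $f_h$, $h=1,\dots,C$, convex continuously differentiable with gradients $g_h$ satisfying $\|g_h(x)\|\le L_h$ on $\mathcal{X}$. Suppose the weights $W_{i,k}[J,h]\ge0$ are nonnegative and satisfy SLC with constant $M>0$, the server graph is complete (consensus step $x^I_{0,k+1}=\frac1S\sum_{J=1}^S x^J_{\Delta,k}$), all servers start from the same point $x^J_{0,0}=x_{0,0}\in\mathcal{X}$, and the step sizes satisfy $\alpha_k>0$, $\lim_{k\to\infty}\alpha_k=0$ and $\sum_{k=0}^\infty\alpha_k=\infty$. Let $x_{0,k}$ denote the common value of $x^J_{0,k}$ over $J$. Then $$\lim_{k\to\infty}\mathrm{dist}(x_{0,k},\mathcal{X}^* )=0\quad\text{and}\quad\lim_{k\to\infty}f(x_{0,k})=f^*.$$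
   Context: $\mathcal{P}_{\mathcal{X}}$ is Euclidean projection onto $\mathcal{X}$; $f=\sum_{h=1}^Cf_h$, $f^*=\min_{x\in\mathcal{X}}f(x)$, $\mathcal{X}^*=\{x\in\mathcal{X}:f(x)=f^*\}$, $\mathrm{dist}(x,\mathcal{X}^* )=\inf_{x^*\in\mathcal{X}^*}\|x-x^*\|$ (Euclidean norm). Weight matrices $W_{i,k}\in\mathbb{R}^{S\times C}$ ($0\le i\le\Delta-1$, $k\ge0$). Symmetric Learning Condition (SLC): there is $M>0$ with $\sum_{i=1}^{\Delta}\sum_{J=1}^S W_{i-1,k}[J,h]=M$ for all $k\ge0$ and all $h$. Iteration: for each $k\ge0$ and $i=1,\dots,\Delta$, $x^J_{i,k}=\mathcal{P}_{\mathcal{X}}\big[x^J_{i-1,k}-\alpha_k\sum_{h=1}^C W_{i-1,k}[J,h]\,g_h(x^J_{i-1,k})\big]$, followed by the consensus step. *)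

(* Defs.v *)
From Stdlib Require Import Reals.
From mathcomp Require Import ssreflect ssrfun ssrbool eqtype ssrnat seq fintype.
Set Implicit Arguments. Unset Strict Implicit.
Open Scope R_scope.

Definition rsum (n : nat) (F : 'I_n -> R) : R :=
  foldr Rplus 0 (map F (enum 'I_n)).

Definition vec (D : nat) := 'I_D -> R.
Definition vadd {D} (x y : vec D) : vec D := fun d => x d + y d.
Definition vsub {D} (x y : vec D) : vec D := fun d => x d - y d.
Definition vscale {D} (a : R) (x : vec D) : vec D := fun d => a * x d.
Definition vsum {D n} (F : 'I_n -> vec D) : vec D := fun d => rsum (fun j => F j d).
Definition dot {D} (x y : vec D) : R := rsum (fun d => x d * y d).
Definition norm {D} (x : vec D) : R := sqrt (dot x x).

Definition convex_set {D} (X : vec D -> Prop) : Prop :=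
  forall x y t, X x -> X y -> 0 <= t <= 1 ->
    X (vadd (vscale t x) (vscale (1 - t) y)).
Definition closed_set {D} (X : vec D -> Prop) : Prop :=
  forall (u : nat -> vec D) (l : vec D), (forall n, X (u n)) ->
    Un_cv (fun n => norm (vsub (u n) l)) 0 -> X l.
Definition bounded_set {D} (X : vec D -> Prop) : Prop :=
  exists B, forall x, X x -> norm x <= B.
(* Compactness in R^D (Heine-Borel): closed and bounded. *)
Definition compact_set {D} (X : vec D -> Prop) : Prop :=
  closed_set X /\ bounded_set X.

Definition convex_fun {D} (f : vec D -> R) : Prop :=
  forall x y t, 0 <= t <= 1 ->
    f (vadd (vscale t x) (vscale (1 - t) y)) <= t * f x + (1 - t) * f y.
Definition has_gradient_at {D} (f : vec D -> R) (gx : vec D) (x : vec D) : Prop :=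
  forall eps, 0 < eps -> exists delta, 0 < delta /\
    forall y, norm (vsub y x) < delta ->
      Rabs (f y - f x - dot gx (vsub y x)) <= eps * norm (vsub y x).
Definition continuous_vfun {D} (g : vec D -> vec D) : Prop :=
  forall x eps, 0 < eps -> exists delta, 0 < delta /\
    forall y, norm (vsub y x) < delta -> norm (vsub (g y) (g x)) < eps.
Definition C1_with_gradient {D} (f : vec D -> R) (g : vec D -> vec D) : Prop :=
  (forall x, has_gradient_at f (g x) x) /\ continuous_vfun g.

Definition is_proj {D} (X : vec D -> Prop) (y p : vec D) : Prop :=
  X p /\ forall q, X q -> norm (vsub y p) <= norm (vsub y q).

Definition is_inf (E : R -> Prop) (m : R) : Prop :=
  (forall r, E r -> m <= r) /\ (forall m', (forall r, E r -> m' <= r) -> m' <= m).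

Definition is_min_value {D} (f : vec D -> R) (X : vec D -> Prop) (fstar : R) : Prop :=
  (exists xs, X xs /\ f xs = fstar) /\ (forall x, X x -> fstar <= f x).

Definition argmin_set {D} (f : vec D -> R) (X : vec D -> Prop) (fstar : R) : vec D -> Prop :=
  fun x => X x /\ f x = fstar.

Definition is_dist {D} (A : vec D -> Prop) (x : vec D) (d : R) : Prop :=
  is_inf (fun r => exists a, A a /\ r = norm (vsub x a)) d.

(* Main.v *)
Require Import Defs.
From Stdlib Require Import Reals Lra Psatz ClassicalEpsilon FunctionalExtensionality Classical.
From mathcomp Require Import ssreflect ssrfun ssrbool eqtype ssrnat seq fintype.
From mathcomp Require Import zify.
Open Scope R_scope.

Definition lsum {T} (s : seq T) (F : T -> R) : R := foldr Rplus 0 (map F s).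

Lemma lsum_cons T (a : T) s F : lsum (a :: s) F = F a + lsum s F.
Proof. reflexivity. Qed.

Lemma lsum_ext T (s : seq T) (F G : T -> R) : (forall x, F x = G x) -> lsum s F = lsum s G.
Proof. move=> H; elim: s => [|a s IH] //=; rewrite !lsum_cons IH H //. Qed.

Lemma lsum_plus T (s : seq T) (F G : T -> R) :
  lsum s (fun x => F x + G x) = lsum s F + lsum s G.
Proof. elim: s => [|a s IH]; [rewrite /lsum /=; lra| rewrite !lsum_cons IH; lra]. Qed.

Lemma lsum_scal T (s : seq T) (F : T -> R) c :
  lsum s (fun x => c * F x) = c * lsum s F.
Proof. elim: s => [|a s IH]; [rewrite /lsum /=; lra| rewrite !lsum_cons IH; lra]. Qed.

Lemma lsum_le T (s : seq T) (F G : T -> R) :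
  (forall x, F x <= G x) -> lsum s F <= lsum s G.
Proof. move=> H; elim: s => [|a s IH]; [rewrite /lsum /=; lra| rewrite !lsum_cons; move: (H a); lra]. Qed.

Lemma lsum_swap T U (s : seq T) (t : seq U) (F : T -> U -> R) :
  lsum s (fun x => lsum t (fun y => F x y)) = lsum t (fun y => lsum s (fun x => F x y)).
Proof.
elim: s => [|a s IH].
- rewrite /lsum /=. elim: t => [|b t IHt] //=. rewrite -IHt /=. lra.
- rewrite lsum_cons IH -lsum_plus. apply: lsum_ext => y. rewrite lsum_cons //.
Qed.

Lemma lsum_const T (s : seq T) c : lsum s (fun _ => c) = INR (size s) * c.
Proof. elim: s => [|a s IH]; [rewrite /lsum /=; lra| rewrite lsum_cons IH; change (size (a::s)) with (size s).+1; rewrite S_INR; lra]. Qed.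

Lemma lsum_term (T : eqType) (s : seq T) (F : T -> R) x :
  (forall y, 0 <= F y) -> x \in s -> F x <= lsum s F.
Proof.
move=> H; elim: s => [|a s IH] //=. rewrite in_cons lsum_cons.
case/orP=> [/eqP ->|Hx].
- have : 0 <= lsum s F by (elim: s {IH} => [|b s IHs]; [rewrite /lsum /=; lra| rewrite lsum_cons; move: (H b); lra]).
  lra.
- move: (IH Hx) (H a); lra.
Qed.

Lemma lsum_ge0 T (s : seq T) (F : T -> R) : (forall y, 0 <= F y) -> 0 <= lsum s F.
Proof. move=> H; elim: s => [|b s IHs]; [rewrite /lsum /=; lra| rewrite lsum_cons; move: (H b); lra]. Qed.

Lemma rsumE n (F : 'I_n -> R) : rsum F = lsum (enum 'I_n) F.
Proof. reflexivity. Qed.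

Lemma rsum_ext n (F G : 'I_n -> R) : (forall x, F x = G x) -> rsum F = rsum G.
Proof. rewrite !rsumE; exact: lsum_ext. Qed.
Lemma rsum_plus n (F G : 'I_n -> R) : rsum (fun x => F x + G x) = rsum F + rsum G.
Proof. rewrite !rsumE; exact: lsum_plus. Qed.
Lemma rsum_scal n (F : 'I_n -> R) c : rsum (fun x => c * F x) = c * rsum F.
Proof. rewrite !rsumE; exact: lsum_scal. Qed.
Lemma rsum_le n (F G : 'I_n -> R) : (forall x, F x <= G x) -> rsum F <= rsum G.
Proof. rewrite !rsumE; exact: lsum_le. Qed.
Lemma rsum_ge0 n (F : 'I_n -> R) : (forall x, 0 <= F x) -> 0 <= rsum F.
Proof. rewrite !rsumE; exact: lsum_ge0. Qed.
Lemma rsum_swap n m (F : 'I_n -> 'I_m -> R) :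
  rsum (fun x => rsum (fun y => F x y)) = rsum (fun y => rsum (fun x => F x y)).
Proof. rewrite !rsumE; exact: lsum_swap. Qed.
Lemma rsum_const n c : rsum (fun _ : 'I_n => c) = INR n * c.
Proof. rewrite rsumE lsum_const size_enum_ord //. Qed.
Lemma rsum_term n (F : 'I_n -> R) x : (forall y, 0 <= F y) -> F x <= rsum F.
Proof. move=> H; rewrite rsumE; apply: lsum_term => //; rewrite mem_enum //. Qed.
Lemma rsum_lin n (F G : 'I_n -> R) a b :
  rsum (fun d => a * F d + b * G d) = a * rsum F + b * rsum G.
Proof. rewrite rsum_plus !rsum_scal //. Qed.
Lemma rsum_opp n (F : 'I_n -> R) : rsum (fun d => - F d) = - rsum F.
Proof. rewrite (@rsum_ext _ _ (fun d => (-1) * F d)); [rewrite rsum_scal; lra| move=> d; lra]. Qed.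
Lemma rsum_minus n (F G : 'I_n -> R) : rsum (fun x => F x - G x) = rsum F - rsum G.
Proof. rewrite (@rsum_ext _ _ (fun x => F x + - G x)) ?rsum_plus ?rsum_opp; [lra | move=> x; lra]. Qed.

Fixpoint fsum (m : nat) (T : nat -> R) : R :=
  match m with O => 0 | S m' => fsum m' T + T m' end.

Lemma fsum_sum_f_R0 T m : sum_f_R0 T m = fsum (S m) T.
Proof. elim: m => [|m IH] /=; [lra| rewrite IH /=; lra]. Qed.

Lemma fsum_ext m (F G : nat -> R) : (forall i, (i < m)%nat -> F i = G i) -> fsum m F = fsum m G.
Proof. elim: m => [|m IH] H //=. rewrite IH ?H //; move=> i Hi; apply: H; lia. Qed.
Lemma fsum_plus m (F G : nat -> R) : fsum m (fun x => F x + G x) = fsum m F + fsum m G.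
Proof. elim: m => [|m IH] /=; [lra| rewrite IH; lra]. Qed.
Lemma fsum_scal m (F : nat -> R) c : fsum m (fun x => c * F x) = c * fsum m F.
Proof. elim: m => [|m IH] /=; [lra| rewrite IH; lra]. Qed.
Lemma fsum_term m (F : nat -> R) i : (forall j, 0 <= F j) -> (i < m)%nat -> F i <= fsum m F.
Proof.
move=> H; elim: m => [|m IH] //= Hi.
have H0 : 0 <= fsum m F by (elim: m {IH Hi} => [|m IHm] /=; [lra| move: (H m); lra]).
case: (ltnP i m) => Him.
- move: (IH Him) (H m); lra.
- have -> : i = m by lia. lra.
Qed.
Lemma fsum_rsum_swap m n (F : nat -> 'I_n -> R) :
  fsum m (fun i => rsum (fun J => F i J)) = rsum (fun J => fsum m (fun i => F i J)).
Proof.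
elim: m => [|m IH] /=.
- rewrite rsum_const; lra.
- rewrite IH -rsum_plus //.
Qed.
Lemma rsum_lin3 n (F G H : 'I_n -> R) a b c :
  rsum (fun d => a * F d + b * G d + c * H d) = a * rsum F + b * rsum G + c * rsum H.
Proof. rewrite rsum_plus rsum_lin rsum_scal //. Qed.

Definition sq {D} (v : vec D) := dot v v.

Lemma dot_ge0 {D} (v : vec D) : 0 <= dot v v.
Proof. apply: rsum_ge0 => d; nra. Qed.

Lemma norm_ge0 {D} (v : vec D) : 0 <= norm v.
Proof. apply: sqrt_pos. Qed.

Lemma norm_sq {D} (v : vec D) : norm v * norm v = dot v v.
Proof. rewrite /norm sqrt_sqrt //; apply: dot_ge0. Qed.

Lemma dot_comm {D} (u v : vec D) : dot u v = dot v u.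
Proof. apply: rsum_ext => d; lra. Qed.

Lemma dot_vsub_comm {D} (a b : vec D) : dot (vsub a b) (vsub a b) = dot (vsub b a) (vsub b a).
Proof. apply: rsum_ext => d; rewrite /vsub; ring. Qed.

Lemma norm_vsub_comm {D} (a b : vec D) : norm (vsub a b) = norm (vsub b a).
Proof. rewrite /norm dot_vsub_comm //. Qed.

Lemma le_of_sq a b : 0 <= b -> a * a <= b * b -> a <= b.
Proof. move=> Hb H; nra. Qed.

Lemma quad_disc a b c : 0 <= a -> (forall t, 0 <= c + 2*t*b + t*t*a) -> b*b <= a*c.
Proof.
move=> Ha H. case: (Rle_lt_or_eq_dec 0 a Ha) => [Hap|Ha0].
- have H1 := H (-b/a).
  have E : c + 2 * (- b / a) * b + - b / a * (- b / a) * a = c - b*b/a by field; lra.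
  rewrite E in H1.
  have E2 : b * b = a * (b*b/a) by field; lra.
  rewrite E2. apply: Rmult_le_compat_l; lra.
- subst a. case: (Req_dec b 0) => [->|Hb]; first lra.
  have H1 := H (-(c+1)/(2*b)).
  have E : c + 2 * (- (c + 1) / (2 * b)) * b + - (c + 1) / (2 * b) * (- (c + 1) / (2 * b)) * 0 = -1 by field.
  lra.
Qed.

Lemma cauchy_schwarz {D} (u v : vec D) : Rabs (dot u v) <= norm u * norm v.
Proof.
have H : dot u v * dot u v <= dot v v * dot u u.
  apply: quad_disc; first exact: dot_ge0.
  move=> t. have := dot_ge0 (fun d => u d + t * v d).
  rewrite /dot (@rsum_ext _ _ (fun d => 1 * (u d * u d) + (2*t) * (u d * v d) + (t*t) * (v d * v d))).
  - rewrite rsum_lin3 -/(dot u u) -/(dot u v) -/(dot v v). lra.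
  - move=> d; ring.
have Hu := norm_sq u. have Hv := norm_sq v. have Hu0 := norm_ge0 u. have Hv0 := norm_ge0 v.
apply: le_of_sq; first nra.
rewrite -Rabs_mult Rabs_pos_eq; first nra. nra.
Qed.

Lemma norm_triangle {D} (u v : vec D) : norm (vadd u v) <= norm u + norm v.
Proof.
apply: le_of_sq; first by have := norm_ge0 u; have := norm_ge0 v; lra.
rewrite norm_sq /dot (@rsum_ext _ _ (fun d => 1 * (u d * u d) + 2 * (u d * v d) + 1 * (v d * v d))).
- rewrite rsum_lin3 -/(dot u u) -/(dot u v) -/(dot v v) -!norm_sq.
  have := cauchy_schwarz u v. have := Rle_abs (dot u v). nra.
- move=> d; rewrite /vadd; ring.
Qed.

Lemma norm_scale {D} a (v : vec D) : norm (vscale a v) = Rabs a * norm v.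
Proof.
have H : dot (vscale a v) (vscale a v) = (a*a) * dot v v.
  rewrite -rsum_scal; apply: rsum_ext => d; rewrite /vscale; ring.
have H1 := norm_sq (vscale a v). have H2 := norm_sq v.
have H3 := norm_ge0 (vscale a v). have H4 := norm_ge0 v. have H5 := Rabs_pos a.
have H6 : Rabs a * Rabs a = a * a by rewrite -Rabs_mult Rabs_pos_eq; nra.
apply: Rle_antisym; apply: le_of_sq; nra.
Qed.

Lemma dot_zero {D} : dot (fun _ : 'I_D => 0) (fun _ => 0) = 0.
Proof. rewrite /dot (@rsum_ext _ _ (fun _ => 0)) ?rsum_const; [lra| move=> d; lra]. Qed.

Lemma norm_zero {D} : norm (fun _ : 'I_D => 0) = 0.
Proof. rewrite /norm dot_zero sqrt_0 //. Qed.

Definition lv {D} {T} (s : seq T) (F : T -> vec D) : vec D := fun d => lsum s (fun j => F j d).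

Lemma norm_lv {D} T (s : seq T) (F : T -> vec D) : norm (lv s F) <= lsum s (fun j => norm (F j)).
Proof.
elim: s => [|a s IH].
- rewrite /lv /lsum /= norm_zero; lra.
- have -> : lv (a :: s) F = vadd (F a) (lv s F) by apply: functional_extensionality.
  rewrite lsum_cons. have := norm_triangle (F a) (lv s F). lra.
Qed.

Lemma norm_vsum {D} n (F : 'I_n -> vec D) : norm (vsum F) <= rsum (fun j => norm (F j)).
Proof. rewrite rsumE; exact: norm_lv. Qed.

Lemma coord_le_norm {D} (v : vec D) d : Rabs (v d) <= norm v.
Proof.
have H : v d * v d <= dot v v by apply: (@rsum_term _ (fun e => v e * v e)) => y; nra.
rewrite -norm_sq in H. apply: le_of_sq; first exact: norm_ge0.
rewrite -Rabs_mult Rabs_pos_eq; nra.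
Qed.

Lemma norm_vsub_le {D} (a b : vec D) : norm (vsub a b) <= norm a + norm b.
Proof.
have -> : vsub a b = vadd a (vscale (-1) b) by apply: functional_extensionality => d; rewrite /vsub /vadd /vscale; ring.
have := norm_triangle a (vscale (-1) b). rewrite norm_scale Rabs_Ropp Rabs_R1. lra.
Qed.

Lemma dot_vsum_l {D} n (F : 'I_n -> vec D) v : dot (vsum F) v = rsum (fun j => dot (F j) v).
Proof.
rewrite /dot /vsum. rewrite (@rsum_ext _ _ (fun d => rsum (fun j => F j d * v d))).
- rewrite rsum_swap //.
- move=> d. rewrite Rmult_comm -rsum_scal; apply: rsum_ext => j; lra.
Qed.

Lemma dot_vscale_l {D} a (u v : vec D) : dot (vscale a u) v = a * dot u v.
Proof. rewrite /dot -rsum_scal; apply: rsum_ext => d; rewrite /vscale; ring. Qed.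
Definition incr (phi : nat -> nat) := forall n, (phi n < phi n.+1)%nat.

Lemma incr_ge {phi} : incr phi -> forall n, (n <= phi n)%nat.
Proof. move=> H; elim=> [|n IH] //; have := H n; lia. Qed.

Lemma incr_mono {phi} : incr phi -> forall m n, (m <= n)%nat -> (phi m <= phi n)%nat.
Proof.
move=> H m n; elim: n => [|n IH] Hmn.
- have -> : m = 0%nat by lia. done.
- case: (ltnP n m) => Hnm.
  + have -> : m = n.+1 by lia. done.
  + have := IH Hnm; have := H n; lia.
Qed.

Lemma incr_comp phi psi : incr phi -> incr psi -> incr (fun n => phi (psi n)).
Proof.
move=> H1 H2 n. have := H2 n => h. have := incr_mono H1 (psi n).+1 (psi n.+1).
have := H1 (psi n). lia.
Qed.

Lemma cv_subseq u l phi : incr phi -> Un_cv u l -> Un_cv (fun n => u (phi n)) l.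
Proof.
move=> Hp H eps Heps. case: (H eps Heps) => N HN. exists N => n Hn.
apply: HN. have := incr_ge Hp n. lia.
Qed.

Lemma choice_nat {A : Type} {P : nat -> A -> Prop} :
  (forall n, exists x, P n x) -> exists f : nat -> A, forall n, P n (f n).
Proof.
move=> H. exists (fun n => proj1_sig (constructive_indefinite_description _ (H n))).
move=> n. exact: proj2_sig.
Qed.

Lemma build_subseq {P : nat -> nat -> Prop} :
  (forall N n, exists p, (N <= p)%nat /\ P n p) ->
  exists phi, incr phi /\ forall n, P n (phi n).
Proof.
move=> H.
pose pick N n := proj1_sig (constructive_indefinite_description _ (H N n)).
have Hpick : forall N n, (N <= pick N n)%nat /\ P n (pick N n).
  move=> N n; exact: (proj2_sig (constructive_indefinite_description _ (H N n))).
exists (fix phi n := match n with O => pick 0%nat 0%nat | S m => pick (phi m).+1 (S m) end).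
split.
- move=> n /=. exact: (proj1 (Hpick _ _)).
- case=> [|n] /=; exact: (proj2 (Hpick _ _)).
Qed.

Lemma inv_small {eps} : 0 < eps -> exists N, forall n, (N <= n)%nat -> / (INR n + 1) < eps.
Proof.
move=> He. case: (archimed_cor1 eps He) => N [HN HN0]. exists N => n Hn.
have H1 : INR N <= INR n + 1. { have h : (N <= n)%coq_nat by apply/leP. have := le_INR _ _ h. lra. }
have H2 : 0 < INR N by apply: lt_0_INR.
apply: Rle_lt_trans HN. apply: Rinv_le_contravar; lra.
Qed.

Lemma bw1 {u : nat -> R} {B} : (forall n, Rabs (u n) <= B) ->
  exists phi, incr phi /\ exists l, Un_cv (fun n => u (phi n)) l.
Proof.
move=> Hb.
have Hc := compact_P3 (-B) B.
have Hin : forall n, (fun c => -B <= c <= B) (u n).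
  move=> n /=. have := Hb n. have := Rle_abs (u n). have := Rle_abs (- u n). rewrite Rabs_Ropp. lra.
case: (Bolzano_Weierstrass u _ Hc Hin) => l Hl.
have H : forall N n, exists p, (N <= p)%nat /\ Rabs (u p - l) < / (INR n + 1).
  move=> N n.
  have Hpos : 0 < / (INR n + 1) by apply: Rinv_0_lt_compat; have := pos_INR n; lra.
  case: (Hl (disc l (mkposreal _ Hpos)) N).
  - exists (mkposreal _ Hpos) => y Hy. exact: Hy.
  - move=> p [Hp1 Hp2]. exists p; split; first by apply/leP.
    move: Hp2; rewrite /disc /=. done.
case: (build_subseq H) => phi [Hphi HP].
exists phi; split => //. exists l => eps Heps.
case: (inv_small Heps) => N HN. exists N => n Hn. rewrite /Rdist.
apply: Rlt_trans (HN n _); [exact: HP| by apply/leP].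
Qed.
Lemma cv_const c : Un_cv (fun _ => c) c.
Proof. move=> e He; exists 0%nat => n _; rewrite /Rdist Rminus_diag Rabs_R0; lra. Qed.

Lemma cv_lsum T (s : seq T) (a : nat -> T -> R) :
  (forall d, Un_cv (fun n => a n d) 0) -> Un_cv (fun n => lsum s (a n)) 0.
Proof.
move=> H; elim: s => [|x s IH].
- exact: cv_const.
- rewrite /lsum /=. have := CV_plus _ _ _ _ (H x) IH. rewrite Rplus_0_r. done.
Qed.


Lemma lt_of_sq a b : 0 <= a -> 0 <= b -> a * a < b * b -> a < b.
Proof. move=> *; nra. Qed.

Lemma cv_sqrt0 (a : nat -> R) : (forall n, 0 <= a n) -> Un_cv a 0 -> Un_cv (fun n => sqrt (a n)) 0.
Proof.
move=> H0 H e He. case: (H (e*e)) => [|N HN]; first nra.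
exists N => n Hn. have := HN n Hn. rewrite /Rdist !Rminus_0_r.
rewrite (Rabs_pos_eq (a n)) // Rabs_pos_eq; last exact: sqrt_pos.
move=> h. apply: lt_of_sq; [exact: sqrt_pos| lra| rewrite sqrt_sqrt //].
Qed.

Lemma bw_coords {D} {u : nat -> vec D} {B} : (forall n, norm (u n) <= B) ->
  forall s : seq 'I_D, exists phi, incr phi /\ exists l : vec D,
    forall d, d \in s -> Un_cv (fun n => u (phi n) d) (l d).
Proof.
move=> Hb; elim=> [|d s [phi [Hphi [l Hl]]]].
- exists id; split; first by move=> n /=; lia. exists (fun _ => 0) => d //.
- have Hb' : forall n, Rabs (u (phi n) d) <= B.
    move=> n; apply: Rle_trans (Hb (phi n)); exact: coord_le_norm.
  case: (bw1 Hb') => psi [Hpsi [a Ha]].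
  exists (fun n => phi (psi n)); split; first exact: incr_comp.
  exists (fun e => if e == d then a else l e) => e.
  rewrite in_cons. case: (eqVneq e d) => [->|Hne] /=.
  + move=> _; exact: Ha.
  + move=> He. exact: (@cv_subseq (fun n => u (phi n) e) (l e) psi Hpsi (Hl e He)).
Qed.

Lemma bw_vec {D} {u : nat -> vec D} {B} : (forall n, norm (u n) <= B) ->
  exists phi, incr phi /\ exists l : vec D,
    Un_cv (fun n => norm (vsub (u (phi n)) l)) 0.
Proof.
move=> Hb. case: (bw_coords Hb (enum 'I_D)) => phi [Hphi [l Hl]].
exists phi; split => //; exists l.
apply: cv_sqrt0; first by move=> n; exact: dot_ge0.
apply: (@cv_lsum _ (enum 'I_D) (fun n d => (u (phi n) d - l d) * (u (phi n) d - l d))) => d.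
have Hd : Un_cv (fun n => u (phi n) d) (l d) by apply: Hl; rewrite mem_enum.
have H1 := CV_minus _ _ _ _ Hd (cv_const (l d)).
have H2 := CV_mult _ _ _ _ H1 H1.
rewrite Rminus_diag Rmult_0_l in H2. exact: H2.
Qed.

Lemma seq_compact {D} {X : vec D -> Prop} {u : nat -> vec D} :
  compact_set X -> (forall n, X (u n)) ->
  exists phi, incr phi /\ exists l, X l /\ Un_cv (fun n => norm (vsub (u (phi n)) l)) 0.
Proof.
move=> [Hcl [B HB]] Hu.
case: (@bw_vec D u B (fun n => HB _ (Hu n))) => phi [Hphi [l Hl]].
exists phi; split => //; exists l; split => //.
apply: (Hcl (fun n => u (phi n))) => // n.
Qed.
Lemma sq_comb {D} (a b : vec D) t :
  dot (fun d => a d - t * b d) (fun d => a d - t * b d) = dot a a - 2*t*dot a b + t*t*dot b b.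
Proof.
rewrite /dot (@rsum_ext _ _ (fun d => 1 * (a d * a d) + (-2*t) * (a d * b d) + (t*t) * (b d * b d))).
- rewrite rsum_lin3; ring.
- move=> d; ring.
Qed.

Lemma proj_ineq {D} (X : vec D -> Prop) y p z :
  convex_set X -> is_proj X y p -> X z -> sq (vsub p z) <= sq (vsub y z).
Proof.
move=> Hc [Hp Hmin] Hz.
set a := vsub y p. set b := vsub z p.
have Ht : forall t, 0 < t <= 1 -> 2 * dot a b <= t * dot b b.
  move=> t Ht.
  have Hq := Hmin _ (Hc z p t Hz Hp (conj (Rlt_le _ _ (proj1 Ht)) (proj2 Ht))).
  have E : vsub y (vadd (vscale t z) (vscale (1 - t) p)) = (fun d => a d - t * b d).
    apply: functional_extensionality => d; rewrite /a /b /vsub /vadd /vscale; ring.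
  rewrite E in Hq.
  have Hq2 : norm a * norm a <= norm (fun d => a d - t * b d) * norm (fun d => a d - t * b d).
    apply: Rmult_le_compat; try exact: norm_ge0; exact: Hq.
  rewrite !norm_sq sq_comb in Hq2. nra.
have Hab : dot a b <= 0.
  case: (Rle_or_lt (dot a b) 0) => // Hpos.
  have Hbb := dot_ge0 b.
  set t := Rmin 1 (dot a b / (dot b b + 1)).
  have Ht0 : 0 < t by apply: Rmin_pos; [lra| apply: Rdiv_lt_0_compat; lra].
  have Ht1 : t <= 1 by apply: Rmin_l.
  have Ht2 : t <= dot a b / (dot b b + 1) by apply: Rmin_r.
  have := Ht t (conj Ht0 Ht1).
  have : t * (dot b b + 1) <= dot a b.
    have E : dot a b = dot a b / (dot b b + 1) * (dot b b + 1) by field; lra.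
    rewrite {1}E. apply: Rmult_le_compat_r; lra.
  nra.
have E1 : vsub y z = (fun d => a d - 1 * b d).
  apply: functional_extensionality => d; rewrite /a /b /vsub; ring.
have E2 : sq (vsub p z) = dot b b.
  rewrite /sq dot_vsub_comm //.
rewrite /sq E1 sq_comb -/(sq (vsub p z)) E2.
have := dot_ge0 a. nra.
Qed.

Lemma dot_vscale_r {D} a (u v : vec D) : dot u (vscale a v) = a * dot u v.
Proof. rewrite dot_comm dot_vscale_l dot_comm //. Qed.

Lemma le_eps a b c : 0 <= c -> (forall e, 0 < e -> a <= b + e * c) -> a <= b.
Proof.
move=> Hc H. case: (Rle_or_lt a b) => // Hab.
have := H ((a - b) / (2 * (c + 1))). 
have Hp : 0 < (a - b) / (2 * (c + 1)) by apply: Rdiv_lt_0_compat; lra.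
move=> /(_ Hp) h.
have : (a - b) / (2 * (c + 1)) * c < a - b.
  have E : (a - b) / (2 * (c + 1)) * c = (a - b) * (c / (2 * (c+1))) by field; lra.
  rewrite E. have : c / (2 * (c+1)) < 1.
    apply: (Rmult_lt_reg_r (2 * (c+1))); first lra.
    have E' : c / (2 * (c + 1)) * (2 * (c + 1)) = c by field; lra.
    rewrite E'; lra.
  have : 0 <= c / (2 * (c+1)) by apply: Rle_mult_inv_pos; lra.
  nra.
lra.
Qed.

Lemma grad_ineq {D} (f : vec D -> R) gx x y :
  convex_fun f -> has_gradient_at f gx x -> f x + dot gx (vsub y x) <= f y.
Proof.
move=> Hc Hg.
set v := vsub y x. set n := norm v.
have Hn : 0 <= n := norm_ge0 v.
suff H : forall e, 0 < e -> dot gx v <= (f y - f x) + e * n by have := le_eps _ _ _ Hn H; lra.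
move=> e He. case: (Hg e He) => del [Hdel Hd].
set t := Rmin (1/2) (del / (n + 1)).
have Ht0 : 0 < t by apply: Rmin_pos; [lra| apply: Rdiv_lt_0_compat; lra].
have Ht1 : t <= 1/2 by apply: Rmin_l.
have Ht2 : t <= del / (n + 1) by apply: Rmin_r.
set p := vadd (vscale t y) (vscale (1 - t) x).
have Ep : vsub p x = vscale t v.
  apply: functional_extensionality => d; rewrite /p /v /vsub /vadd /vscale; ring.
have Hnp : norm (vsub p x) = t * n by rewrite Ep norm_scale Rabs_pos_eq //; lra.
have Hsmall : norm (vsub p x) < del.
  rewrite Hnp. have : t * (n + 1) <= del.
    have E : del = del / (n + 1) * (n + 1) by field; lra.
    rewrite {1}E. apply: Rmult_le_compat_r; lra.
  nra.
have H1 := Hd p Hsmall.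
rewrite Hnp Ep dot_vscale_r in H1.
have Ht3 : 0 <= t <= 1 by lra.
have H2 := Hc y x t Ht3.
rewrite -/p in H2.
have H3 : - (e * (t * n)) <= f p - f x - t * dot gx v.
  have := Rle_abs (- (f p - f x - t * dot gx v)). rewrite Rabs_Ropp. lra.
have H4 : t * dot gx v <= t * ((f y - f x) + e * n) by nra.
apply: (Rmult_le_reg_l t) => //.
Qed.

Lemma lip_ineq {D} (f : vec D -> R) g Lh y z :
  convex_fun f -> has_gradient_at f g y -> norm g <= Lh ->
  f y - f z <= Lh * norm (vsub y z).
Proof.
move=> Hc Hg HL.
have H := @grad_ineq D f g y z Hc Hg.
have Hcs := cauchy_schwarz g (vsub z y).
have := Rle_abs (- dot g (vsub z y)). rewrite Rabs_Ropp.
rewrite norm_vsub_comm.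
have := Rmult_le_compat_r _ _ _ (norm_ge0 (vsub z y)) HL. lra.
Qed.
Lemma inf_exists (E : R -> Prop) : (exists x, E x) -> (exists m, forall r, E r -> m <= r) ->
  {m | is_inf E m}.
Proof.
move=> Hne Hb.
have Hb' : bound (fun r => E (- r)).
  case: Hb => m Hm. exists (- m) => r Hr. have := Hm _ Hr. lra.
have Hne' : exists x, (fun r => E (- r)) x.
  case: Hne => x Hx. exists (- x). rewrite Ropp_involutive //.
case: (completeness _ Hb' Hne') => m [Hub Hlub].
exists (- m); split.
- move=> r Hr. have : - r <= m by apply: Hub; rewrite Ropp_involutive. lra.
- move=> m' Hm'. have : m <= - m'.
    apply: Hlub => r Hr. have := Hm' _ Hr. lra.
  lra.
Qed.

Lemma avg_in_lv {D} {T} (X : vec D -> Prop) (F : T -> vec D) (s : seq T) :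
  convex_set X -> s <> [::] -> (forall j, X (F j)) ->
  X (vscale (/ INR (size s)) (lv s F)).
Proof.
move=> Hc; elim: s => [|a s IH] // _ HX.
case: s IH => [|b s] IH.
- have -> : vscale (/ INR (size [:: a])) (lv [:: a] F) = F a.
    apply: functional_extensionality => d; rewrite /vscale /lv /lsum /=. field.
  exact: HX.
- have Hs : (b :: s) <> [::] by [].
  have H1 := IH Hs HX.
  set n := INR (size (b :: s)).
  have Hn : 0 < n by rewrite /n; apply: lt_0_INR; rewrite /=; lia.
  have Ht : 0 <= / (n + 1) <= 1.
    split; first by apply: Rlt_le; apply: Rinv_0_lt_compat; lra.
    rewrite -Rinv_1; apply: Rinv_le_contravar; lra.
  have E : vscale (/ INR (size [:: a, b & s])) (lv [:: a, b & s] F) =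
           vadd (vscale (/ (n + 1)) (F a)) (vscale (1 - / (n + 1)) (vscale (/ n) (lv (b :: s) F))).
    apply: functional_extensionality => d.
    rewrite /vscale /vadd /lv lsum_cons.
    have -> : INR (size [:: a, b & s]) = n + 1 by rewrite /n -S_INR.
    field; lra.
  rewrite E. exact: Hc.
Qed.

Lemma avg_in {D} (X : vec D -> Prop) S (v : 'I_S -> vec D) :
  (1 <= S)%nat -> convex_set X -> (forall J, X (v J)) -> X (vscale (/ INR S) (vsum v)).
Proof.
move=> HS Hc HX.
have := @avg_in_lv D _ X v (enum 'I_S) Hc _ HX.
rewrite size_enum_ord. apply.
move=> He. have := size_enum_ord S. rewrite He /=. lia.
Qed.

Lemma jensen1 S (a : 'I_S -> R) c : (1 <= S)%nat ->
  (/ INR S * rsum a - c) * (/ INR S * rsum a - c) <= / INR S * rsum (fun J => (a J - c) * (a J - c)).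
Proof.
move=> HS.
have HSp : 0 < INR S by apply: lt_0_INR; lia.
set m := / INR S * rsum a - c.
have H0 : 0 <= rsum (fun J => (a J - c - m) * (a J - c - m)) by apply: rsum_ge0 => J; exact: Rle_0_sqr.
rewrite (@rsum_ext _ _ (fun J => 1 * ((a J - c) * (a J - c)) + (-2 * m) * a J + (2 * m * c + m * m) * 1)) in H0;
  last by move=> J; ring.
rewrite rsum_lin3 rsum_const in H0.
have Hra : rsum a = INR S * (m + c) by rewrite /m; field; lra.
rewrite Hra in H0.
set Q := rsum _ in H0 *.
have : INR S * (m * m) <= Q by nra.
move=> h. apply: (Rmult_le_reg_l (INR S)) => //.
have -> : INR S * (/ INR S * Q) = Q by field; lra.
exact: h.
Qed.

Lemma jensen {D} S (v : 'I_S -> vec D) z : (1 <= S)%nat ->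
  sq (vsub (vscale (/ INR S) (vsum v)) z) <= / INR S * rsum (fun J => sq (vsub (v J) z)).
Proof.
move=> HS. rewrite /sq /dot.
rewrite (@rsum_swap _ _ (fun J d => vsub (v J) z d * vsub (v J) z d)) -rsum_scal.
apply: rsum_le => d. rewrite /vsub /vscale /vsum.
exact: jensen1.
Qed.
Section Opt.
Variables (D : nat) (X : vec D -> Prop) (F : vec D -> R) (Lc : R).
Hypothesis HLc : 0 <= Lc.
Hypothesis HLip : forall y z, X y -> X z -> F y - F z <= Lc * norm (vsub y z).
Hypothesis HXcomp : compact_set X.

Lemma lim_le {u : nat -> vec D} {phi l c} :
  (forall n, X (u n)) -> incr phi -> X l ->
  Un_cv (fun n => norm (vsub (u (phi n)) l)) 0 ->
  (forall n, F (u n) < c + / (INR n + 1)) -> F l <= c.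
Proof.
move=> Hu Hphi Hl Hcv Hf.
case: (Rle_or_lt (F l) c) => // Hlt.
have [eta Heq] : exists eta, eta = F l - c by eexists.
have Heta : 0 < eta by rewrite Heq; lra.
case: (Hcv (eta / (2 * (Lc + 1)))) => [|N1 HN1].
  apply: Rlt_gt; apply: Rdiv_lt_0_compat; lra.
case: (inv_small (eps := eta / 2)) => [|N2 HN2]; first lra.
set n := maxn N1 N2.
have H1 := HN1 n (ltac:(apply/leP; rewrite /n; apply: leq_maxl)).
rewrite /Rdist Rminus_0_r Rabs_pos_eq in H1; last exact: norm_ge0.
have H2 := HN2 (phi n) (ltac:(have := incr_ge Hphi n; have := leq_maxr N1 N2; rewrite -/n; lia)).
have H3 := HLip l (u (phi n)) Hl (Hu _).
rewrite norm_vsub_comm in H3.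
have H4 := Hf (phi n).
have H5 : Lc * norm (vsub (u (phi n)) l) <= Lc * (eta / (2 * (Lc + 1))).
  apply: Rmult_le_compat_l; lra.
have H6 : Lc * (eta / (2 * (Lc + 1))) < eta / 2.
  have E : Lc * (eta / (2 * (Lc + 1))) = (eta / 2) * (Lc / (Lc + 1)) by field; lra.
  rewrite E. have : Lc / (Lc + 1) < 1.
    apply: (Rmult_lt_reg_r (Lc + 1)); first lra.
    have E' : Lc / (Lc + 1) * (Lc + 1) = Lc by field; lra.
    rewrite E'; lra.
  have : 0 <= Lc / (Lc+1) by apply: Rle_mult_inv_pos; lra.
  nra.
lra.
Qed.

Lemma min_exists : (exists x, X x) -> exists fstar, is_min_value F X fstar.
Proof.
move=> [x0 Hx0].
have [B HB] := proj2 HXcomp.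
set E := fun r => exists x, X x /\ r = F x.
have Hne : exists r, E r by exists (F x0), x0.
have Hlb : exists m, forall r, E r -> m <= r.
  exists (F x0 - Lc * (2 * B)) => r [x [Hx ->]].
  have := HLip x0 x Hx0 Hx. have := norm_vsub_le x0 x. have := HB _ Hx0. have := HB _ Hx.
  move=> *. have : Lc * norm (vsub x0 x) <= Lc * (2 * B) by apply: Rmult_le_compat_l; lra.
  lra.
case: (inf_exists _ Hne Hlb) => m [Hm1 Hm2].
have Hseq : forall n, exists x, X x /\ F x < m + / (INR n + 1).
  move=> n. apply: NNPP => Hno.
  have Hpos : 0 < / (INR n + 1) by apply: Rinv_0_lt_compat; have := pos_INR n; lra.
  have : m + / (INR n + 1) <= m.
    apply: Hm2 => r [x [Hx ->]].
    apply: Rnot_lt_le => Hlt. apply: Hno. by exists x.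
  lra.
case: (choice_nat Hseq) => u Hu.
case: (seq_compact HXcomp (fun n => proj1 (Hu n))) => phi [Hphi [l [Hl Hcv]]].
have Hle := lim_le (fun n => proj1 (Hu n)) Hphi Hl Hcv (fun n => proj2 (Hu n)).
exists (F l); split; first by exists l.
move=> x Hx. have := Hm1 (F x) (ex_intro _ x (conj Hx erefl)). lra.
Qed.

Lemma level fstar : is_min_value F X fstar ->
  forall del, 0 < del -> exists eta, 0 < eta /\ forall x, X x -> F x < fstar + eta ->
    exists z, X z /\ F z = fstar /\ norm (vsub x z) < del.
Proof.
move=> [_ Hmin] del Hdel. apply: NNPP => H.
have Hseq : forall n, exists x, X x /\ F x < fstar + / (INR n + 1) /\
    forall z, X z -> F z = fstar -> del <= norm (vsub x z).
  move=> n. apply: NNPP => Hno. apply: H.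
  exists (/ (INR n + 1)); split; first by apply: Rinv_0_lt_compat; have := pos_INR n; lra.
  move=> x Hx Hfx. apply: NNPP => Hz. apply: Hno. exists x; split => //; split => //.
  move=> z HXz Hfz. apply: Rnot_lt_le => Hlt. apply: Hz. by exists z.
case: (choice_nat Hseq) => u Hu.
case: (seq_compact HXcomp (fun n => proj1 (Hu n))) => phi [Hphi [l [Hl Hcv]]].
have Hle := lim_le (fun n => proj1 (Hu n)) Hphi Hl Hcv (fun n => proj1 (proj2 (Hu n))).
have Hfl : F l = fstar by have := Hmin _ Hl; lra.
case: (Hcv del) => [|N HN]; first lra.
have := HN N (le_n N). rewrite /Rdist Rminus_0_r Rabs_pos_eq; last exact: norm_ge0.
have := proj2 (proj2 (Hu (phi N))) l Hl Hfl. lra.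
Qed.
End Opt.
Lemma triple_swap Dl S C (W : nat -> 'I_S -> 'I_C -> R) (c : 'I_C -> R) :
  rsum (fun J => fsum Dl (fun i => rsum (fun h => W i J h * c h))) =
  rsum (fun h => c h * fsum Dl (fun i => rsum (fun J => W i J h))).
Proof.
rewrite -fsum_rsum_swap.
rewrite (@fsum_ext _ _ (fun i => rsum (fun h => rsum (fun J => W i J h * c h)))); last first.
  move=> i _; exact: rsum_swap.
rewrite fsum_rsum_swap. apply: rsum_ext => h.
rewrite -fsum_scal. apply: fsum_ext => i _.
rewrite -rsum_scal. apply: rsum_ext => J. ring.
Qed.

Lemma dist_ex {D} (A : vec D -> Prop) a : A a -> forall x, {d | is_dist A x d}.
Proof.
move=> Ha x. apply: inf_exists.
- exists (norm (vsub x a)), a. done.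
- exists 0 => r [b [_ ->]]. exact: norm_ge0.
Qed.

Lemma seq_conv (e a phi : nat -> R) c C0 :
  0 < c -> 0 <= C0 -> (forall k, 0 < a k) -> Un_cv a 0 -> cv_infty (fun n => sum_f_R0 a n) ->
  (forall k, 0 <= e k) -> (forall k, 0 <= phi k) ->
  (forall k, e (S k) <= e k - c * a k * phi k + a k * a k * C0) ->
  (forall del, 0 < del -> exists eta, 0 < eta /\ forall k, phi k < eta -> e k < del) ->
  forall del, 0 < del -> exists N, forall k, (N <= k)%nat -> e k <= 2 * del.
Proof.
move=> Hc HC0 Ha Hacv Hinf He Hphi Hrec Hlev del Hdel.
case: (Hlev del Hdel) => eta [Heta Hle].
have [beta Hbeta] : exists beta, beta = Rmin (c * eta / (2 * (C0 + 1))) (Rmin 1 (del / (C0 + 1))) by eexists.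
have Hb1 : beta <= c * eta / (2 * (C0 + 1)) by rewrite Hbeta; apply: Rmin_l.
have Hb2 : beta <= 1 by rewrite Hbeta; apply: Rle_trans (Rmin_r _ _) (Rmin_l _ _).
have Hb3 : beta <= del / (C0 + 1) by rewrite Hbeta; apply: Rle_trans (Rmin_r _ _) (Rmin_r _ _).
have Hb0 : 0 < beta.
  rewrite Hbeta; apply: Rmin_pos; [apply: Rdiv_lt_0_compat; nra| apply: Rmin_pos; [lra| apply: Rdiv_lt_0_compat; lra]].
case: (Hacv beta Hb0) => N1 HN1.
have Hsmall : forall k, (N1 <= k)%nat -> a k * C0 <= c * eta / 2 /\ a k * a k * C0 <= del.
  move=> k Hk. have := HN1 k (ltac:(apply/leP; exact: Hk)).
  rewrite /Rdist Rminus_0_r Rabs_pos_eq; last by have := Ha k; lra.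
  move=> hk. have hak := Ha k.
  have h1 : a k * (C0 + 1) <= c * eta / 2.
    have : a k * (C0 + 1) <= c * eta / (2 * (C0 + 1)) * (C0 + 1) by apply: Rmult_le_compat_r; lra.
    have -> : c * eta / (2 * (C0 + 1)) * (C0 + 1) = c * eta / 2 by field; lra. done.
  have h2 : a k * (C0 + 1) <= del.
    have : a k * (C0 + 1) <= del / (C0 + 1) * (C0 + 1) by apply: Rmult_le_compat_r; lra.
    have -> : del / (C0 + 1) * (C0 + 1) = del by field; lra. done.
  split; first nra.
  have : a k * (a k * (C0 + 1)) <= 1 * del by apply: Rmult_le_compat; nra.
  nra.
have Hcase1 : forall k, (N1 <= k)%nat -> eta <= phi k -> e (S k) <= e k - c * eta / 2 * a k.
  move=> k Hk Hp. have [h1 _] := Hsmall k Hk. have := Hrec k. have := Ha k.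
  move=> hak hr. have : c * a k * eta <= c * a k * phi k by apply: Rmult_le_compat_l; nra.
  nra.
have Hcase2 : forall k, (N1 <= k)%nat -> phi k < eta -> e (S k) <= 2 * del.
  move=> k Hk Hp. have [_ h2] := Hsmall k Hk. have := Hrec k. have := Hle k Hp.
  have : 0 <= c * a k * phi k by have := Ha k; have := Hphi k; move=> *; apply: Rmult_le_pos; nra.
  lra.
have HA : exists k0, (N1 <= k0)%nat /\ phi k0 < eta.
  apply: NNPP => Hno.
  have Hall : forall k, (N1 <= k)%nat -> eta <= phi k.
    move=> k Hk. apply: Rnot_lt_le => Hlt. apply: Hno. by exists k.
  have Hinv : forall m, e (S (N1 + m)) + c * eta / 2 * sum_f_R0 a (N1 + m) <=
                        e (S N1) + c * eta / 2 * sum_f_R0 a N1.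
    elim=> [|m IH]; first by rewrite addn0; lra.
    have H1 := Hcase1 (S (N1 + m)) (ltac:(lia)) (Hall (S (N1 + m)) (ltac:(lia))).
    rewrite addnS /=. lra.
  case: (Hinf (2 * (e (S N1) + c * eta / 2 * sum_f_R0 a N1) / (c * eta))) => N HN.
  have HNN := HN (N1 + N)%nat (ltac:(apply/leP; lia)).
  have H1 := Hinv N. have := He (S (N1 + N)).
  move=> h0.
  have : c * eta / 2 * sum_f_R0 a (N1 + N) <= e (S N1) + c * eta / 2 * sum_f_R0 a N1 by lra.
  move=> h.
  have Hce : 0 < c * eta by nra.
  have : 2 * (e (S N1) + c * eta / 2 * sum_f_R0 a N1) / (c * eta) * (c * eta) < sum_f_R0 a (N1 + N) * (c * eta).
    apply: Rmult_lt_compat_r => //.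
  have -> : 2 * (e (S N1) + c * eta / 2 * sum_f_R0 a N1) / (c * eta) * (c * eta) =
            2 * (e (S N1) + c * eta / 2 * sum_f_R0 a N1) by field; lra.
  lra.
case: HA => k0 [Hk0 Hp0].
exists (S k0) => k Hk.
have : forall m, e (S k0 + m)%nat <= 2 * del.
  elim=> [|m IH].
  - rewrite addn0. exact: Hcase2.
  - rewrite addnS. case: (Rle_or_lt eta (phi (S k0 + m)%nat)) => Hp.
    + have := Hcase1 (S k0 + m)%nat (ltac:(lia)) Hp.
      have : 0 <= c * eta / 2 * a (S k0 + m)%nat.
        apply: Rmult_le_pos; [nra| apply: Rlt_le; exact: Ha].
      lra.
    + exact: Hcase2 (S k0 + m)%nat (ltac:(lia)) Hp.
move=> H. have -> : k = (S k0 + (k - S k0))%nat by lia. exact: H.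
Qed.
Theorem theorem3
  (S C D Delta : nat) (HS : (1 <= S)%nat) (HC : (1 <= C)%nat)
  (HD : (1 <= D)%nat) (HDelta : (1 <= Delta)%nat)
  (X : vec D -> Prop)
  (HXne : exists x, X x) (HXconv : convex_set X) (HXcomp : compact_set X)
  (f : 'I_C -> vec D -> R) (g : 'I_C -> vec D -> vec D) (L : 'I_C -> R)
  (Hfconv : forall h, convex_fun (f h))
  (HfC1 : forall h, C1_with_gradient (f h) (g h))
  (HgL : forall h x, X x -> norm (g h x) <= L h)
  (W : nat -> nat -> 'I_S -> 'I_C -> R)
  (HWnn : forall i k J h, 0 <= W i k J h)
  (HSLC : exists M, 0 < M /\ forall k h,
      sum_f_R0 (fun i => rsum (fun J => W i k J h)) (Delta - 1) = M)
  (alpha : nat -> R)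
  (Hapos : forall k, 0 < alpha k)
  (Halim : Un_cv alpha 0)
  (Hasum : cv_infty (fun n => sum_f_R0 alpha n))
  (x : nat -> nat -> 'I_S -> vec D)  (* x i k J = x^J_{i,k} *)
  (x00 : vec D) (Hx00 : X x00)
  (Hinit : forall J, x 0%nat 0%nat J = x00)
  (Hstep : forall k i J, (i < Delta)%nat ->
     is_proj X
       (vsub (x i k J)
             (vscale (alpha k) (vsum (fun h => vscale (W i k J h) (g h (x i k J))))))
       (x i.+1 k J))
  (Hcons : forall k I, x 0%nat k.+1 I = vscale (/ INR S) (vsum (fun J => x Delta k J))) :
  let F := fun y => rsum (fun h => f h y) in
  exists fstar, is_min_value F X fstar /\
    forall J : 'I_S,
      (exists d : nat -> R,
         (forall k, is_dist (argmin_set F X fstar) (x 0%nat k J) (d k)) /\ Un_cv d 0) /\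
      Un_cv (fun k => F (x 0%nat k J)) fstar.
Proof.
move=> F.
have HFdef : forall y, F y = rsum (fun h => f h y) by [].
clearbody F.
have HL0 : forall h, 0 <= L h.
  move=> h; case: HXne => x0 Hx0; have := HgL h x0 Hx0; have := norm_ge0 (g h x0); lra.
have [Lsum HLsum] : exists Ls, Ls = rsum L by eexists.
have HLs0 : 0 <= Lsum by rewrite HLsum; exact: rsum_ge0.
have HLip : forall y z, X y -> X z -> F y - F z <= Lsum * norm (vsub y z).
  move=> y z Hy Hz. rewrite !HFdef -rsum_minus HLsum Rmult_comm -rsum_scal.
  apply: rsum_le => h. rewrite Rmult_comm.
  exact: lip_ineq (Hfconv h) ((proj1 (HfC1 h)) y) (HgL h y Hy).
case: (@min_exists D X F Lsum HLs0 HLip HXcomp HXne) => fstar Hfstar.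
exists fstar; split => //.
move=> J.
have Hsame : forall k J', x 0%nat k J' = x 0%nat k J.
  case=> [|k] J'; first by rewrite !Hinit.
  by rewrite !Hcons.
have HDe : (Delta.-1).+1 = Delta by lia.
have HXD : forall k J', X (x Delta k J').
  move=> k J'. have := Hstep k (Delta.-1) J' (ltac:(lia)). rewrite HDe. by case.
have HX0 : forall k J', X (x 0%nat k J').
  case=> [|k] J'; first by rewrite Hinit.
  rewrite Hcons. apply: avg_in => //.
have HXx : forall k i J', (i <= Delta)%nat -> X (x i k J').
  move=> k [|i] J' Hi; first exact: HX0.
  have := Hstep k i J' (ltac:(lia)). by case.
case: HSLC => M [HM HMsum].
have HMf : forall k h, fsum Delta (fun i => rsum (fun J' => W i k J' h)) = M.
  move=> k h. rewrite -(HMsum k h) fsum_sum_f_R0. congr fsum. lia.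
have HWM : forall i k J' h, (i < Delta)%nat -> W i k J' h <= M.
  move=> i k J' h Hi. rewrite -(HMf k h).
  apply: Rle_trans (@fsum_term Delta (fun i => rsum (fun J' => W i k J' h)) i _ Hi).
  - exact: (@rsum_term _ (fun J' => W i k J' h)).
  - move=> j; apply: rsum_ge0 => J''; exact: HWnn.
have [K HK] : exists K, K = M * Lsum by eexists.
have HK0 : 0 <= K by rewrite HK; apply: Rmult_le_pos; lra.
have Hs : forall i k J' y, (i < Delta)%nat -> X y ->
    norm (vsum (fun h => vscale (W i k J' h) (g h y))) <= K.
  move=> i k J' y Hi Hy. apply: Rle_trans; first exact: norm_vsum.
  rewrite HK HLsum -rsum_scal. apply: rsum_le => h.
  rewrite norm_scale Rabs_pos_eq; last exact: HWnn.
  apply: Rmult_le_compat; [exact: HWnn| exact: norm_ge0| exact: HWM| exact: HgL].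
have Hdot_neg : forall (u a b : vec D), dot u (vsub a b) = - dot u (vsub b a).
  move=> u a b. rewrite -rsum_opp. apply: rsum_ext => d. rewrite /vsub. ring.
have Hdisp : forall k i J', (i < Delta)%nat ->
    norm (vsub (x i.+1 k J') (x i k J')) <= alpha k * K.
  move=> k i J' Hi.
  have Hxi : X (x i k J') by apply: HXx; lia.
  set s := vsum (fun h => vscale (W i k J' h) (g h (x i k J'))).
  have H1 := @proj_ineq D X _ _ _ HXconv (Hstep k i J' Hi) Hxi.
  rewrite -/s in H1.
  have E : vsub (vsub (x i k J') (vscale (alpha k) s)) (x i k J') = (fun d => 0 - alpha k * s d).
    apply: functional_extensionality => d; rewrite /vsub /vscale; ring.
  rewrite /sq E (@sq_comb D (fun _ => 0) s (alpha k)) dot_zero in H1.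
  have H0 : dot (fun _ : 'I_D => 0) s = 0.
    rewrite /dot (@rsum_ext _ _ (fun _ => 0)) ?rsum_const; [lra| move=> d; lra].
  rewrite H0 -!norm_sq in H1.
  have Hsk := Hs i k J' _ Hi Hxi. rewrite -/s in Hsk.
  have Ha := Hapos k.
  apply: le_of_sq; first by apply: Rmult_le_pos; lra.
  have := norm_ge0 s => hs.
  have h1 : 0 <= alpha k * norm s by apply: Rmult_le_pos; lra.
  have h2 : alpha k * norm s <= alpha k * K by apply: Rmult_le_compat_l; lra.
  have h3 : (alpha k * norm s) * (alpha k * norm s) <= (alpha k * K) * (alpha k * K) by apply: Rmult_le_compat.
  have E2 : alpha k * alpha k * (norm s * norm s) = (alpha k * norm s) * (alpha k * norm s) by ring.
  rewrite E2 in H1. lra.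
have Hfdrift : forall k J' h i, (i <= Delta)%nat ->
    f h (x 0%nat k J') - L h * INR i * (alpha k * K) <= f h (x i k J').
  move=> k J' h; elim=> [|i IH] Hi; first by rewrite /=; lra.
  have Hxi : X (x i k J') by apply: HXx; lia.
  have H1 := @lip_ineq D (f h) (g h (x i k J')) (L h) (x i k J') (x i.+1 k J') (Hfconv h) ((proj1 (HfC1 h)) (x i k J')) (HgL h _ Hxi).
  rewrite norm_vsub_comm in H1.
  have H2 := Hdisp k i J' (ltac:(lia)).
  have H3 := IH (ltac:(lia)).
  have : L h * norm (vsub (x i.+1 k J') (x i k J')) <= L h * (alpha k * K) by apply: Rmult_le_compat_l.
  rewrite S_INR. lra.
have Hstepineq : forall k J' z i, X z -> (i < Delta)%nat ->
    sq (vsub (x i.+1 k J') z) <= sq (vsub (x i k J') z)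
      - 2 * alpha k * rsum (fun h => W i k J' h * (f h (x 0%nat k J') - f h z))
      + alpha k * alpha k * (K * K * (2 * INR Delta + 1)).
  move=> k J' z i Hz Hi.
  have Hxi : X (x i k J') by apply: HXx; lia.
  set xi := x i k J'.
  set s := vsum (fun h => vscale (W i k J' h) (g h xi)).
  have H1 := @proj_ineq D X _ _ _ HXconv (Hstep k i J' Hi) Hz.
  rewrite -/xi -/s in H1.
  have E : vsub (vsub xi (vscale (alpha k) s)) z = (fun d => vsub xi z d - alpha k * s d).
    apply: functional_extensionality => d; rewrite /vsub /vscale; ring.
  rewrite /sq E (@sq_comb D (vsub xi z) s (alpha k)) in H1.
  have Hdot : dot (vsub xi z) s = rsum (fun h => W i k J' h * dot (g h xi) (vsub xi z)).
    rewrite dot_comm /s dot_vsum_l. apply: rsum_ext => h. exact: dot_vscale_l.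
  set T := rsum (fun h => W i k J' h * (f h (x 0%nat k J') - f h z)).
  set Q := rsum (fun h => W i k J' h * L h).
  have Hlow : T - INR i * (alpha k * K) * Q <= dot (vsub xi z) s.
    rewrite Hdot /T /Q -rsum_scal -rsum_minus. apply: rsum_le => h.
    have G := @grad_ineq D (f h) (g h xi) xi z (Hfconv h) ((proj1 (HfC1 h)) xi).
    have Hn := Hdot_neg (g h xi) xi z.
    have Hd := Hfdrift k J' h i (ltac:(lia)). rewrite -/xi in Hd.
    have HW := HWnn i k J' h.
    have : f h (x 0%nat k J') - f h z - L h * INR i * (alpha k * K) <= dot (g h xi) (vsub xi z) by lra.
    move=> hh. have := Rmult_le_compat_l _ _ _ HW hh. 
    have -> : W i k J' h * (f h (x 0%nat k J') - f h z - L h * INR i * (alpha k * K)) =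
              W i k J' h * (f h (x 0%nat k J') - f h z) - W i k J' h * L h * (INR i * (alpha k * K)) by ring.
    lra.
  have HQ : Q <= K.
    rewrite /Q HK HLsum -rsum_scal. apply: rsum_le => h.
    apply: Rmult_le_compat_r; [exact: HL0| exact: HWM].
  have HQ0 : 0 <= Q by apply: rsum_ge0 => h; apply: Rmult_le_pos; [exact: HWnn| exact: HL0].
  have Ha := Hapos k.
  have Hi0 := pos_INR i.
  have HiD : INR i <= INR Delta by apply: le_INR; lia.
  have h2 : INR i * (alpha k * K) * Q <= INR Delta * (alpha k * K) * K.
    have hak : 0 <= alpha k * K by apply: Rmult_le_pos; lra.
    apply: Rmult_le_compat => //; first by apply: Rmult_le_pos.
    by apply: Rmult_le_compat_r.
  have h3 : alpha k * alpha k * dot s s <= alpha k * alpha k * (K * K).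
    apply: Rmult_le_compat_l; first nra.
    rewrite -norm_sq. have := Hs i k J' xi Hi Hxi. rewrite -/s. have := norm_ge0 s. nra.
  have h4 : 2 * alpha k * (T - INR i * (alpha k * K) * Q) <= 2 * alpha k * dot (vsub xi z) s.
    apply: Rmult_le_compat_l; lra.
  have h5 : 2 * alpha k * (INR i * (alpha k * K) * Q) <= 2 * alpha k * (INR Delta * (alpha k * K) * K).
    apply: Rmult_le_compat_l; lra.
  have E3 : alpha k * alpha k * (K * K * (2 * INR Delta + 1)) =
            2 * alpha k * (INR Delta * (alpha k * K) * K) + alpha k * alpha k * (K * K) by ring.
  rewrite /sq E3. lra.
have [C1 HC1] : exists C1, C1 = K * K * (2 * INR Delta + 1) by eexists.
have Htel : forall k J' z m, X z -> (m <= Delta)%nat ->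
    sq (vsub (x m k J') z) <= sq (vsub (x 0%nat k J') z)
      - 2 * alpha k * fsum m (fun i => rsum (fun h => W i k J' h * (f h (x 0%nat k J') - f h z)))
      + INR m * (alpha k * alpha k * C1).
  move=> k J' z; elim=> [|m IH] Hz Hm.
  - rewrite /=. lra.
  - have H1 := Hstepineq k J' z m Hz (ltac:(lia)).
    have H2 := IH Hz (ltac:(lia)).
    rewrite -HC1 in H1. rewrite S_INR /=. lra.
have Hrec : forall k z, X z ->
    sq (vsub (x 0%nat k.+1 J) z) <= sq (vsub (x 0%nat k J) z)
      - (2 * alpha k * M / INR S) * (F (x 0%nat k J) - F z)
      + alpha k * alpha k * (INR Delta * C1).
  move=> k z Hz.
  have HSp : 0 < INR S by apply: lt_0_INR; lia.
  rewrite (Hcons k J).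
  apply: Rle_trans; first exact: (jensen S (fun J' => x Delta k J') z HS).
  set A := sq (vsub (x 0%nat k J) z).
  set c := fun h => f h (x 0%nat k J) - f h z.
  have Hterm : forall J', sq (vsub (x Delta k J') z) <=
      1 * A + (- 2 * alpha k) * fsum Delta (fun i => rsum (fun h => W i k J' h * c h))
      + 1 * (INR Delta * (alpha k * alpha k * C1)).
    move=> J'. have := Htel k J' z Delta Hz (leqnn _). rewrite Hsame. rewrite /A /c. lra.
  have Hsum := @rsum_le _ _ _ Hterm.
  rewrite (@rsum_lin3 _ (fun _ => A) (fun J' => fsum Delta (fun i => rsum (fun h => W i k J' h * c h))) (fun _ => INR Delta * (alpha k * alpha k * C1))) in Hsum.
  rewrite !rsum_const in Hsum.
  rewrite (@triple_swap Delta S C (fun i J' h => W i k J' h) c) in Hsum.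
  rewrite (@rsum_ext _ _ (fun h => M * c h)) in Hsum; last by move=> h; rewrite HMf; ring.
  rewrite rsum_scal /c rsum_minus -!HFdef in Hsum.
  apply: Rle_trans (Rmult_le_compat_l _ _ _ (Rlt_le _ _ (Rinv_0_lt_compat _ HSp)) Hsum) _.
  apply: Req_le. field. lra.
case: (proj1 Hfstar) => xs [Hxs Hfxs].
set Xstar := argmin_set F X fstar.
have HXs : Xstar xs by split.
pose d k := proj1_sig (@dist_ex D Xstar xs HXs (x 0%nat k J)).
have Hd : forall k, is_dist Xstar (x 0%nat k J) (d k) by move=> k; exact: proj2_sig.
have Hd0 : forall k, 0 <= d k.
  move=> k. apply: (proj2 (Hd k)) => r [a [_ ->]]. exact: norm_ge0.
have Hdle : forall k z, Xstar z -> d k <= norm (vsub (x 0%nat k J) z).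
  move=> k z Hz. apply: (proj1 (Hd k)). by exists z.
have Hdapprox : forall k e, 0 < e -> exists z, Xstar z /\ norm (vsub (x 0%nat k J) z) < d k + e.
  move=> k e He. apply: NNPP => Hno.
  have : d k + e <= d k.
    apply: (proj2 (Hd k)) => r [a [Ha ->]].
    apply: Rnot_lt_le => Hlt. apply: Hno. by exists a.
  lra.
have HFge : forall k, fstar <= F (x 0%nat k J).
  move=> k. apply: (proj2 Hfstar). apply: HXx. lia.
have HSp : 0 < INR S by apply: lt_0_INR; lia.
have HC10 : 0 <= C1 by rewrite HC1; have := pos_INR Delta; move=> *; apply: Rmult_le_pos; nra.
have Hrecd : forall k, d k.+1 * d k.+1 <= d k * d k - (2 * M / INR S) * alpha k * (F (x 0%nat k J) - fstar)
                 + alpha k * alpha k * (INR Delta * C1).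
  move=> k.
  have [Rr HRr] : exists Rr, Rr = - ((2 * alpha k * M / INR S) * (F (x 0%nat k J) - fstar))
                 + alpha k * alpha k * (INR Delta * C1) by eexists.
  have Hz : forall z, Xstar z -> d k.+1 * d k.+1 - Rr <= norm (vsub (x 0%nat k J) z) * norm (vsub (x 0%nat k J) z).
    move=> z [HzX Hzf].
    have H1 := Hrec k z HzX. rewrite Hzf in H1. rewrite /sq -!norm_sq in H1.
    have H2 := Hdle k.+1 z (conj HzX Hzf).
    have : d k.+1 * d k.+1 <= norm (vsub (x 0%nat k.+1 J) z) * norm (vsub (x 0%nat k.+1 J) z).
      apply: Rmult_le_compat => //; exact: Hd0.
    lra.
  have E : - (2 * M / INR S) * alpha k * (F (x 0%nat k J) - fstar) =
           - ((2 * alpha k * M / INR S) * (F (x 0%nat k J) - fstar)) by field; lra.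
  have Hdk := Hd0 k.
  case: (Rle_or_lt (d k.+1 * d k.+1 - Rr) 0) => Hcase.
  - have : 0 <= d k * d k by nra. lra.
  - set q := sqrt (d k.+1 * d k.+1 - Rr).
    have Hq0 : 0 <= q by exact: sqrt_pos.
    have Hqq : q * q = d k.+1 * d k.+1 - Rr by rewrite /q sqrt_sqrt; lra.
    have Hqd : q <= d k.
      apply: (proj2 (Hd k)) => r [a [Ha ->]].
      apply: le_of_sq; first exact: norm_ge0.
      rewrite Hqq. exact: Hz.
    have : q * q <= d k * d k by apply: Rmult_le_compat.
    lra.
have HM2 : 0 < 2 * M / INR S by apply: Rdiv_lt_0_compat; lra.
have HC0 : 0 <= INR Delta * C1 by apply: Rmult_le_pos; [exact: pos_INR| exact: HC10].
have Hlevel : forall del, 0 < del -> exists eta, 0 < eta /\ forall k, F (x 0%nat k J) - fstar < eta -> d k * d k < del.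
  move=> del Hdel.
  have Hsd : 0 < sqrt del by apply: sqrt_lt_R0.
  case: (@level D X F Lsum HLs0 HLip HXcomp fstar Hfstar (sqrt del) Hsd) => eta [Heta Hlv].
  exists eta; split => // k Hk.
  case: (Hlv (x 0%nat k J) (ltac:(apply: HXx; lia)) (ltac:(lra))) => z [HzX [Hzf Hzn]].
  have H1 := Hdle k z (conj HzX Hzf).
  have Hdk := Hd0 k.
  have : d k * d k < sqrt del * sqrt del by apply: Rmult_le_0_lt_compat; lra.
  rewrite sqrt_sqrt //; lra.
have Hconv := seq_conv (fun k => d k * d k) alpha (fun k => F (x 0%nat k J) - fstar)
  (2 * M / INR S) (INR Delta * C1) HM2 HC0 Hapos Halim Hasum
  (fun k => Rmult_le_pos _ _ (Hd0 k) (Hd0 k))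
  (fun k => ltac:(have := HFge k; lra))
  (fun k => ltac:(have := Hrecd k; lra)) Hlevel.
have Hdcv : Un_cv d 0.
  move=> eps Heps.
  case: (Hconv (eps * eps / 4) (ltac:(nra))) => N HN.
  exists N => n Hn. rewrite /Rdist Rminus_0_r Rabs_pos_eq; last exact: Hd0.
  have := HN n (ltac:(apply/leP; exact: Hn)). have := Hd0 n. nra.
split; first by exists d; split.
have HFub : forall k, F (x 0%nat k J) - fstar <= Lsum * d k.
  move=> k. apply: (le_eps _ _ Lsum HLs0) => e He.
  case: (Hdapprox k e He) => z [[HzX Hzf] Hzn].
  have := HLip (x 0%nat k J) z (ltac:(apply: HXx; lia)) HzX.
  have : Lsum * norm (vsub (x 0%nat k J) z) <= Lsum * (d k + e) by apply: Rmult_le_compat_l; lra.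
  rewrite Hzf. lra.
move=> eps Heps.
case: (Hdcv (eps / (Lsum + 1))) => [|N HN]; first by apply: Rdiv_lt_0_compat; lra.
exists N => n Hn. have := HN n Hn. rewrite /Rdist Rminus_0_r Rabs_pos_eq; last exact: Hd0.
move=> h. rewrite Rabs_pos_eq; last by have := HFge n; lra.
have H1 := HFub n.
have : Lsum * d n <= Lsum * (eps / (Lsum + 1)) by apply: Rmult_le_compat_l; lra.
have : Lsum * (eps / (Lsum + 1)) < eps.
  have E : Lsum * (eps / (Lsum + 1)) = eps * (Lsum / (Lsum + 1)) by field; lra.
  rewrite E. have : Lsum / (Lsum + 1) < 1.
    apply: (Rmult_lt_reg_r (Lsum + 1)); first lra.
    have E' : Lsum / (Lsum + 1) * (Lsum + 1) = Lsum by field; lra.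
    rewrite E'; lra.
  have : 0 <= Lsum / (Lsum+1) by apply: Rle_mult_inv_pos; lra.
  nra.
lra.
Qed.
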